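(* Let $(X,\tau)$ and $(Y,\sigma)$ be fuzzifying topological spaces and $f:X\to Y$ surjective. Then $$\max\big(0,\ L_PC(X,\tau)+I_P(f)+O_P(f)-2\big)\le L_PC(Y,\sigma),$$ i.e. $\vDash L_PC(X,\tau)\otimes I_P(f)\otimes O_P(f)\to L_PC(Y,\sigma)$.
   Context: Łukasiewicz: $[\varphi\otimes\psi]=\max(0,[\varphi]+[\psi]-1)$, $[\varphi\to\psi]=\min(1,1-[\varphi]+[\psi])$. A fuzzifying topology on $Z$ is $\tau:P(Z)\to[0,1]$ with $\tau(Z)=1$, $\tau(A\cap B)\ge\min$, $\tau(\bigcup A_\lambda)\ge\inf\tau(A_\lambda)$. $N_x(A)=\sup_{x\in B\subseteq A}\tau(B)$; $Cl(A)(x)=1-N_x(Z\setminus A)$; for $\mu:Z\to[0,1]$, $Int(\mu)(x)=\sup_{x\in B}\min(\tau(B),\inf_{y\in B}\mu(y))$; pre-open degrees $\tau_P(A)=\inf_{x\in A}Int(Cl(A))(x)$ (similarly $\sigma_P$ on $Y$); $N^P_x(A)=\sup_{x\in B\subseteq A}\tau_P(B)$. For $G\subseteq Z$: $(\tau_P/G)(B)=\sup\{\tau_P(V):V\cap G=B\}$. Compactness degree of $G$ w.r.t. $\eta:P(G)\to[0,1]$: with $K(\Re,G)=\inf_{x\in G}\sup_{B\ni x}\Re(B)$, $[\Re\subseteq\eta]=\inf_B\min(1,1-\Re(B)+\eta(B))$, $\wp\le\Re$ pointwise, $FF(\wp)=1-\inf\{\delta\in[0,1]:\{B:\wp(B)>\delta\}\text{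 finite}\}$, $\Gamma(G,\eta)=\inf_{\Re}\min\big(1,1-\max(0,K(\Re,G)+[\Re\subseteq\eta]-1)+\sup_{\wp\le\Re}\max(0,K(\wp,G)+FF(\wp)-1)\big)$. Locally strong compactness $L_PC(Z,\tau)=\inf_{x\in Z}\sup_{B\subseteq Z}\max(0,N^P_x(B)+\Gamma(B,\tau_P/B)-1)$. Pre-irresoluteness $I_P(f)=\inf_{B\subseteq Y}\min(1,1-\sigma_P(B)+\tau_P(f^{-1}(B)))$; pre-openness $O_P(f)=\inf_{U\subseteq X}\min(1,1-\tau_P(U)+\sigma_P(f(U)))$. *)

(* Defs.v *)
From HB Require Import structures.
From mathcomp Require Import all_boot all_order all_algebra.
From mathcomp Require Import boolp classical_sets functions cardinality reals.
Set Implicit Arguments. Unset Strict Implicit. Unset Printing Implicit Defensive.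
Import Order.TTheory GRing.Theory Num.Theory.
Local Open Scope classical_set_scope.
Local Open Scope ring_scope.

Section Defs.
Variable R : realType.

(* Infimum / supremum of a set of truth values in [0,1], with the standard
   conventions inf of the empty set = 1, sup of the empty set = 0. *)
Definition infI (E : set R) : R := inf (E `|` [set 1]).
Definition supI (E : set R) : R := sup (E `|` [set 0]).

Definition luk_and (a b : R) : R := Num.max 0 (a + b - 1).
Definition luk_imp (a b : R) : R := Num.min 1 (1 - a + b).

Variable Z : Type.

Definition fuzzifying_topology (tau : set Z -> R) : Prop :=
  [/\ (forall A, 0 <= tau A <= 1),
      tau setT = 1,
      (forall A B, Num.min (tau A) (tau B) <= tau (A `&` B)) &
      (forall F : set (set Z),
          infI (tau @` F) <= tau (\bigcup_(A in F) A))].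

Definition nbhd (tau : set Z -> R) (x : Z) (A : set Z) : R :=
  supI [set tau B | B in [set B | B x /\ B `<=` A]].

Definition fclosure (tau : set Z -> R) (A : set Z) (x : Z) : R :=
  1 - nbhd tau x (~` A).

Definition finterior (tau : set Z -> R) (mu : Z -> R) (x : Z) : R :=
  supI [set Num.min (tau B) (infI (mu @` B)) | B in [set B | B x]].

Definition preopen (tau : set Z -> R) (A : set Z) : R :=
  infI [set finterior tau (fclosure tau A) x | x in A].

Definition prenbhd (tau : set Z -> R) (x : Z) (A : set Z) : R :=
  supI [set preopen tau B | B in [set B | B x /\ B `<=` A]].

(* Fuzzy families of subsets of G are encoded as functions set Z -> R with
   values in [0,1] that vanish outside the subsets of G. *)
Definition ffamily (G : set Z) (Re : set Z -> R) : Prop :=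
  (forall B, 0 <= Re B <= 1) /\ (forall B, ~ (B `<=` G) -> Re B = 0).

Definition rel_preopen (tau : set Z -> R) (G : set Z) (B : set Z) : R :=
  supI [set preopen tau V | V in [set V | V `&` G = B]].

Definition Kdeg (Re : set Z -> R) (G : set Z) : R :=
  infI [set supI [set Re B | B in [set B | B x]] | x in G].

Definition incl_deg (G : set Z) (Re eta : set Z -> R) : R :=
  infI [set luk_imp (Re B) (eta B) | B in [set B | B `<=` G]].

Definition FFdeg (P : set Z -> R) : R :=
  1 - infI [set d | 0 <= d <= 1 /\ finite_set [set B | d < P B]].

Definition Gamma (G : set Z) (eta : set Z -> R) : R :=
  infI [set luk_imp (luk_and (Kdeg Re G) (incl_deg G Re eta))
              (supI [set luk_and (Kdeg P G) (FFdeg P)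
                     | P in [set P | ffamily G P /\ (forall B, P B <= Re B)]])
        | Re in ffamily G].

Definition LPC (tau : set Z -> R) : R :=
  infI [set supI [set luk_and (prenbhd tau x B) (Gamma B (rel_preopen tau B))
                 | B in [set: set Z]]
        | x in [set: Z]].

End Defs.

Section Maps.
Variables (R : realType) (X Y : Type).

Definition pre_irresolute (tau : set X -> R) (sigma : set Y -> R) (f : X -> Y) : R :=
  infI [set luk_imp (preopen sigma B) (preopen tau (f @^-1` B)) | B in [set: set Y]].

Definition pre_open_map (tau : set X -> R) (sigma : set Y -> R) (f : X -> Y) : R :=
  infI [set luk_imp (preopen tau U) (preopen sigma (f @` U)) | U in [set: set X]].
End Maps.

(* Main.v *)
Require Import Defs.
From HB Require Import structures.
From mathcomp Require Import all_boot all_order all_algebra.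
From mathcomp Require Import boolp classical_sets functions cardinality reals.
From mathcomp Require Import lra.
Import Order.TTheory GRing.Theory Num.Theory.
Local Open Scope classical_set_scope.
Local Open Scope ring_scope.

Section Gen.
Variable R : realType.
Implicit Types E : set R.
Implicit Types a b c : R.

Lemma supI_ub E e : (forall x, E x -> x <= 1) -> E e -> e <= supI E.
Proof.
move=> h Ee; apply: ub_le_sup; last by left.
by exists 1 => x [/h|->].
Qed.

Lemma supI_lub E c : (forall x, E x -> x <= c) -> 0 <= c -> supI E <= c.
Proof. by move=> h c0; apply: ge_sup; [exists 0; right|move=> x [/h|->]]. Qed.

Lemma supI_ge0 E : (forall x, E x -> x <= 1) -> 0 <= supI E.
Proof.
move=> h; apply: ub_le_sup; last by right.
by exists 1 => x [/h|->].
Qed.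

Lemma supI_le1 E : (forall x, E x -> x <= 1) -> supI E <= 1.
Proof. by move=> h; apply: supI_lub. Qed.

Lemma supI_gt E s : 0 <= s -> s < supI E -> exists2 e, E e & s < e.
Proof.
move=> s0 /sup_gt [|y [Ey|->] sy]; first by exists 0; right.
  by exists y.
by move: sy; rewrite ltNge s0.
Qed.

Lemma infI_lb E e : (forall x, E x -> 0 <= x) -> E e -> infI E <= e.
Proof.
move=> h Ee; apply: ge_inf; last by left.
by exists 0 => x [/h|->].
Qed.

Lemma infI_glb E c : (forall x, E x -> c <= x) -> c <= 1 -> c <= infI E.
Proof. by move=> h c0; apply: lb_le_inf; [exists 1; right|move=> x [/h|->]]. Qed.

Lemma infI_le1 E : (forall x, E x -> 0 <= x) -> infI E <= 1.
Proof.
move=> h; apply: ge_inf; last by right.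
by exists 0 => x [/h|->].
Qed.

Lemma infI_ge0 E : (forall x, E x -> 0 <= x) -> 0 <= infI E.
Proof. by move=> h; apply: infI_glb. Qed.

Lemma luk_and_le a b c : 0 <= c -> a + b - 1 <= c -> luk_and a b <= c.
Proof. by move=> h1 h2; rewrite /luk_and ge_max h1 h2. Qed.
Lemma luk_and_ge0 a b : 0 <= luk_and a b.
Proof. by rewrite /luk_and le_max lexx. Qed.
Lemma luk_and_ge a b : a + b - 1 <= luk_and a b.
Proof. by rewrite /luk_and le_max lexx orbT. Qed.
Lemma luk_imp_ge a b c : c <= 1 -> c <= 1 - a + b -> c <= luk_imp a b.
Proof. by move=> h1 h2; rewrite /luk_imp le_min h1 h2. Qed.
Lemma luk_imp_le1 a b : luk_imp a b <= 1.
Proof. by rewrite /luk_imp ge_min lexx. Qed.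
Lemma luk_imp_le a b : luk_imp a b <= 1 - a + b.
Proof. by rewrite /luk_imp ge_min lexx orbT. Qed.
Lemma luk_imp_ge0 a b : a <= 1 -> 0 <= b -> 0 <= luk_imp a b.
Proof. move=> h1 h2; apply: luk_imp_ge => //; lra. Qed.
Lemma luk_and_le1 a b : a <= 1 -> b <= 1 -> luk_and a b <= 1.
Proof. move=> h1 h2; apply: luk_and_le => //; lra. Qed.
End Gen.
Arguments luk_and_le {R}. Arguments luk_and_ge0 {R}. Arguments luk_and_ge {R}.
Arguments luk_imp_ge {R}. Arguments luk_imp_le1 {R}. Arguments luk_imp_le {R}.
Arguments luk_imp_ge0 {R}. Arguments luk_and_le1 {R}.
Arguments supI_gt {R E s}.
Section Ranges.
Variables (R : realType) (Z : Type) (tau : set Z -> R).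
Hypothesis htau : forall A, 0 <= tau A <= 1.

Lemma supI01 (E : set R) : (forall x, E x -> x <= 1) -> 0 <= supI E <= 1.
Proof. by move=> h; rewrite supI_ge0 // supI_le1. Qed.
Lemma infI01 (E : set R) : (forall x, E x -> 0 <= x) -> 0 <= infI E <= 1.
Proof. by move=> h; rewrite infI_ge0 // infI_le1. Qed.

Lemma nbhd01 x A : 0 <= nbhd tau x A <= 1.
Proof. by apply: supI01 => _ [B _ <-]; case/andP: (htau B). Qed.

Lemma fclosure01 A x : 0 <= Defs.fclosure tau A x <= 1.
Proof.
rewrite /Defs.fclosure; have /andP[h1 h2] := nbhd01 x (~` A).
apply/andP; split; lra.
Qed.

Lemma finterior01 mu x : 0 <= finterior tau mu x <= 1.
Proof.
apply: supI01 => _ [B _ <-]; rewrite ge_min.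
by case/andP: (htau B) => _ ->.
Qed.

Lemma preopen01 A : 0 <= preopen tau A <= 1.
Proof. by apply: infI01 => _ [x _ <-]; case/andP: (finterior01 (Defs.fclosure tau A) x). Qed.

Lemma prenbhd01 x A : 0 <= prenbhd tau x A <= 1.
Proof. by apply: supI01 => _ [B _ <-]; case/andP: (preopen01 B). Qed.

Lemma rel_preopen01 G B : 0 <= rel_preopen tau G B <= 1.
Proof. by apply: supI01 => _ [V _ <-]; case/andP: (preopen01 V). Qed.

Lemma Kdeg01 (Re : set Z -> R) G : (forall B, 0 <= Re B <= 1) -> 0 <= Kdeg Re G <= 1.
Proof.
move=> h; apply: infI01 => _ [x _ <-]; apply: supI_ge0 => _ [B _ <-].
by case/andP: (h B).
Qed.

Lemma incl01 G (Re eta : set Z -> R) : (forall B, 0 <= Re B <= 1) ->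
  (forall B, 0 <= eta B <= 1) -> 0 <= incl_deg G Re eta <= 1.
Proof.
move=> h1 h2; apply: infI01 => _ [B _ <-]; apply: luk_imp_ge0.
  by case/andP: (h1 B). by case/andP: (h2 B).
Qed.

Lemma FF01 (P : set Z -> R) : 0 <= FFdeg P <= 1.
Proof.
rewrite /FFdeg.
have /andP[h1 h2] : 0 <= infI [set d | 0 <= d <= 1 /\ finite_set [set B | d < P B]] <= 1.
  by apply: infI01 => d [/andP[]].
apply/andP; split; lra.
Qed.

Lemma Gamma01 G (eta : set Z -> R) : (forall B, 0 <= eta B <= 1) ->
  0 <= Gamma G eta <= 1.
Proof.
move=> he; apply: infI01 => _ [Re [hRe _] <-]; apply: luk_imp_ge0.
  apply: luk_and_le1.
    by case/andP: (Kdeg01 _ G hRe).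
  by case/andP: (incl01 G _ _ hRe he).
apply: supI_ge0 => _ [P [[hP _] _] <-]; apply: luk_and_le1.
  by case/andP: (Kdeg01 _ G hP).
by case/andP: (FF01 P).
Qed.

Lemma LPC01 : 0 <= LPC tau <= 1.
Proof.
apply: infI01 => _ [x _ <-]; apply: supI_ge0 => _ [B _ <-]; apply: luk_and_le1.
  by case/andP: (prenbhd01 x B).
by case/andP: (Gamma01 B _ (rel_preopen01 B)).
Qed.
End Ranges.
Arguments nbhd01 {R Z tau}. Arguments fclosure01 {R Z tau}. Arguments finterior01 {R Z tau}.
Arguments preopen01 {R Z tau}. Arguments prenbhd01 {R Z tau}. Arguments rel_preopen01 {R Z tau}.
Arguments LPC01 {R Z tau}. Arguments Gamma01 {R Z}. Arguments Kdeg01 {R Z}. Arguments incl01 {R Z}.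
Arguments FF01 {R Z}. Arguments supI01 {R}. Arguments infI01 {R}.
Section Main.
Variables (R : realType) (X Y : Type) (tau : set X -> R) (sigma : set Y -> R) (f : X -> Y).
Hypothesis htau : forall A, 0 <= tau A <= 1.
Hypothesis hsig : forall A, 0 <= sigma A <= 1.

Let beta := pre_irresolute tau sigma f.
Let gamma := pre_open_map tau sigma f.

Lemma beta_le B : beta <= luk_imp (preopen sigma B) (preopen tau (f @^-1` B)).
Proof.
apply: infI_lb; last by exists B.
move=> _ [C _ <-]; apply: luk_imp_ge0.
  by case/andP: (preopen01 hsig C).
by case/andP: (preopen01 htau (f @^-1` C)).
Qed.

Lemma gamma_le U : gamma <= luk_imp (preopen tau U) (preopen sigma (f @` U)).
Proof.
apply: infI_lb; last by exists U.
move=> _ [C _ <-]; apply: luk_imp_ge0.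
  by case/andP: (preopen01 htau C).
by case/andP: (preopen01 hsig (f @` C)).
Qed.

Lemma beta01 : 0 <= beta <= 1.
Proof.
apply: infI01 => _ [C _ <-]; apply: luk_imp_ge0.
  by case/andP: (preopen01 hsig C).
by case/andP: (preopen01 htau (f @^-1` C)).
Qed.

Lemma gamma01 : 0 <= gamma <= 1.
Proof.
apply: infI01 => _ [C _ <-]; apply: luk_imp_ge0.
  by case/andP: (preopen01 htau C).
by case/andP: (preopen01 hsig (f @` C)).
Qed.

Lemma prenbhd_img x B :
  prenbhd tau x B + gamma - 1 <= prenbhd sigma (f x) (f @` B).
Proof.
have /andP[g0 g1] := gamma01.
have /andP[n0 n1] := prenbhd01 hsig (f x) (f @` B).
suff : prenbhd tau x B <= prenbhd sigma (f x) (f @` B) + 1 - gamma by lra.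
apply: supI_lub; last by lra.
move=> _ [C [Cx CB] <-].
have h1 := le_trans (gamma_le C) (luk_imp_le _ _).
have h2 : preopen sigma (f @` C) <= prenbhd sigma (f x) (f @` B).
  apply: supI_ub; last first.
    by exists (f @` C) => //; split; [exists x|exact: image_subset].
  by move=> _ [D _ <-]; case/andP: (preopen01 hsig D).
lra.
Qed.
Lemma Gamma_img B :
  Gamma B (rel_preopen tau B) + beta - 1 <=
  Gamma (f @` B) (rel_preopen sigma (f @` B)).
Proof.
have /andP[b0 b1] := beta01.
set taup := rel_preopen tau B.
set sigp := rel_preopen sigma (f @` B).
have htp : forall A, 0 <= taup A <= 1 := rel_preopen01 htau B.
have hsp : forall A, 0 <= sigp A <= 1 := rel_preopen01 hsig (f @` B).
have /andP[G0 G1] := Gamma01 B taup htp.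
apply: infI_glb; last by lra.
move=> _ [Re [hRe hRe0] <-].
pose Re' A := supI [set Re E | E in [set E | f @^-1` E `&` B = A]].
have hRe' : forall A, 0 <= Re' A <= 1.
  by move=> A; apply: supI01 => _ [E _ <-]; case/andP: (hRe E).
have hRe'0 : forall A, ~ (A `<=` B) -> Re' A = 0.
  move=> A nAB; apply/eqP; rewrite eq_le; case/andP: (hRe' A) => -> _; rewrite andbT.
  apply: supI_lub => // e [E hE _]; exfalso; apply: nAB; rewrite -hE.
  by move=> z [].
have ffRe' : ffamily B Re' by split.
set S' := supI [set luk_and (Kdeg P B) (FFdeg P)
                     | P in [set P | ffamily B P /\ (forall A, P A <= Re' A)]].
set S := supI [set luk_and (Kdeg P (f @` B)) (FFdeg P)
                     | P in [set P | ffamily (f @` B) P /\ (forall E, P E <= Re E)]].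
have GRe' : Gamma B taup <= luk_imp (luk_and (Kdeg Re' B) (incl_deg B Re' taup)) S'.
  apply: infI_lb; last by exists Re'.
  move=> _ [Q [hQ _] <-]; apply: luk_imp_ge0.
    apply: luk_and_le1; first by case/andP: (Kdeg01 Q B hQ).
    by case/andP: (incl01 B Q taup hQ htp).
  apply: supI_ge0 => _ [P [[hP _] _] <-]; apply: luk_and_le1.
    by case/andP: (Kdeg01 P B hP).
  by case/andP: (FF01 P).
have Ki : Kdeg Re (f @` B) <= Kdeg Re' B.
  have /andP[_ k1] := Kdeg01 Re (f @` B) hRe.
  apply: infI_glb => // _ [x Bx <-].
  apply: le_trans (_ : supI [set Re E | E in [set E | E (f x)]] <= _).
    apply: infI_lb; last by exists (f x) => //; exists x.
    by move=> _ [y _ <-]; apply: supI_ge0 => _ [E _ <-]; case/andP: (hRe E).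
  apply: supI_lub; last first.
    by apply: supI_ge0 => _ [A _ <-]; case/andP: (hRe' A).
  move=> _ [E Efx <-].
  apply: (@le_trans _ _ (Re' (f @^-1` E `&` B))).
    apply: supI_ub; last by exists E.
    by move=> _ [E' _ <-]; case/andP: (hRe E').
  apply: supI_ub; last by exists (f @^-1` E `&` B).
  by move=> _ [A _ <-]; case/andP: (hRe' A).
have Kii : incl_deg (f @` B) Re sigp + beta - 1 <= incl_deg B Re' taup.
  have /andP[i0 i1] := incl01 (f @` B) Re sigp hRe hsp.
  apply: infI_glb; last by lra.
  move=> _ [A AB <-]; apply: luk_imp_ge; first by lra.
  have /andP[t0 t1] := htp A.
  suff : Re' A <= taup A + 2 - incl_deg (f @` B) Re sigp - beta by lra.
  apply: supI_lub; last by lra.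
  move=> _ [E hE <-].
  have [EfB|nEfB] := pselect (E `<=` f @` B); last first.
    by rewrite hRe0 //; lra.
  have h1 : incl_deg (f @` B) Re sigp <= 1 - Re E + sigp E.
    apply: le_trans (luk_imp_le _ _).
    apply: infI_lb; last by exists E.
    move=> _ [E' _ <-]; apply: luk_imp_ge0.
      by case/andP: (hRe E'). by case/andP: (hsp E').
  have h2 : sigp E <= taup A + 1 - beta.
    apply: supI_lub; last by lra.
    move=> _ [V hV <-].
    have h3 := le_trans (beta_le V) (luk_imp_le _ _).
    have h4 : preopen tau (f @^-1` V) <= taup A.
      apply: supI_ub; last first.
        exists (f @^-1` V) => //=.
        rewrite -hE -hV; apply/seteqP; split => z /=.
          by move=> [fzV Bz]; split=> //; split=> //; exists z.
        by move=> [[fzV _] Bz].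
      by move=> _ [W _ <-]; case/andP: (preopen01 htau W).
    lra.
  lra.
have Kiii : S' <= S.
  have /andP[S0 S1] : 0 <= S <= 1.
    apply: supI01 => _ [P [[hP _] _] <-]; apply: luk_and_le1.
      by case/andP: (Kdeg01 P (f @` B) hP).
    by case/andP: (FF01 P).
  apply: supI_lub => // _ [P' [[hP' hP'0] hP'le] <-].
  pose P E := Num.min (Re E) (P' (f @^-1` E `&` B)).
  have hP : forall E, 0 <= P E <= 1.
    move=> E; rewrite /P le_min ge_min.
    case/andP: (hRe E) => -> ->; case/andP: (hP' (f @^-1` E `&` B)) => -> _.
    by [].
  have hP0 : forall E, ~ (E `<=` f @` B) -> P E = 0.
    move=> E nE; rewrite /P hRe0 // min_l //.
    by case/andP: (hP' (f @^-1` E `&` B)).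
  have hPle : forall E, P E <= Re E by move=> E; rewrite /P ge_min lexx.
  have ffP : ffamily (f @` B) P by split.
  apply: (@le_trans _ _ (luk_and (Kdeg P (f @` B)) (FFdeg P))); last first.
    apply: supI_ub; last by exists P.
    move=> _ [Q [[hQ _] _] <-]; apply: luk_and_le1.
      by case/andP: (Kdeg01 Q (f @` B) hQ).
    by case/andP: (FF01 Q).
  have KK : Kdeg P' B <= Kdeg P (f @` B).
    have /andP[_ k1] := Kdeg01 P' B hP'.
    apply: infI_glb => // _ [y [x Bx <-] <-].
    set s := supI [set P E | E in [set E | E (f x)]].
    have s0 : 0 <= s by apply: supI_ge0 => _ [E _ <-]; case/andP: (hP E).
    apply: le_trans (_ : supI [set P' A | A in [set A | A x]] <= _).
      apply: infI_lb; last by exists x.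
      by move=> _ [z _ <-]; apply: supI_ge0 => _ [A _ <-]; case/andP: (hP' A).
    apply: supI_lub => // _ [A Ax <-].
    rewrite leNgt; apply/negP => hlt.
    have : s < Re' A by apply: lt_le_trans hlt (hP'le A).
    move=> /(supI_gt s0) [_ [E hE <-] hsE].
    have hPE : P E <= s.
      apply: supI_ub; last first.
        exists E => //=.
        have : (f @^-1` E `&` B) x by rewrite hE.
        by case.
      by move=> _ [E' _ <-]; case/andP: (hP E').
    move: hPE; rewrite /P hE leNgt lt_min hsE hlt.
    by [].
  have FF : FFdeg P' <= FFdeg P.
    rewrite /FFdeg.
    set DP := [set d | 0 <= d <= 1 /\ finite_set [set E | d < P E]].
    set DP' := [set d | 0 <= d <= 1 /\ finite_set [set A | d < P' A]].
    suff : infI DP <= infI DP' by lra.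
    apply: infI_glb; last by apply: infI_le1 => d [/andP[]].
    move=> d [hd01 hfin]; apply: infI_lb; first by move=> e [/andP[]].
    split => //.
    apply: (sub_finite_set _ (finite_image (fun A => f @` A) hfin)).
    move=> E /= hdE.
    have /andP[d0 _] := hd01.
    have hdE' := hdE; rewrite /P lt_min in hdE'; case/andP: hdE' => hRE hP'E.
    exists (f @^-1` E `&` B) => //.
    have EfB : E `<=` f @` B.
      apply: contrapT => nE; move: (le_lt_trans d0 hRE).
      by rewrite hRe0 // ltxx.
    apply/seteqP; split => z.
      by move=> [x [fxE Bx] <-].
    move=> Ez; have [x Bx fxz] := EfB z Ez.
    by exists x => //; split => //=; rewrite fxz.
  apply: luk_and_le; first exact: luk_and_ge0.
  apply: le_trans (luk_and_ge _ _); lra.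
have /andP[k0 k1] := Kdeg01 Re (f @` B) hRe.
have /andP[i0 i1] := incl01 (f @` B) Re sigp hRe hsp.
have h5 := luk_and_ge (Kdeg Re' B) (incl_deg B Re' taup).
have h6 := luk_and_ge0 (Kdeg Re' B) (incl_deg B Re' taup).
have h7 := le_trans GRe' (luk_imp_le _ _).
apply: luk_imp_ge; first by lra.
have : luk_and (Kdeg Re (f @` B)) (incl_deg (f @` B) Re sigp) <=
       luk_and (Kdeg Re' B) (incl_deg B Re' taup) + 1 - beta.
  apply: luk_and_le; lra.
lra.
Qed.
End Main.
Arguments beta01 {R X Y tau sigma f}. Arguments gamma01 {R X Y tau sigma f}.
Arguments prenbhd_img {R X Y tau sigma f}. Arguments Gamma_img {R X Y tau sigma f}.

Theorem theorem4p7 (R : realType) (X Y : Type)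
    (tau : set X -> R) (sigma : set Y -> R) (f : X -> Y) :
  fuzzifying_topology tau -> fuzzifying_topology sigma ->
  (forall y : Y, exists x : X, f x = y) ->
  Num.max 0 (LPC tau + pre_irresolute tau sigma f + pre_open_map tau sigma f - 2)
    <= LPC sigma.
Proof.
move=> [htau _ _ _] [hsig _ _ _] fsurj.
have /andP[a0 a1] := LPC01 htau.
have /andP[b0 b1] := beta01 (f:=f) htau hsig.
have /andP[g0 g1] := gamma01 (f:=f) htau hsig.
apply: infI_glb; last by rewrite ge_max ler01 /=; lra.
move=> _ [y _ <-]; have [x <-] := fsurj y.
set U := supI _.
have U0 : 0 <= U.
  apply: supI_ge0 => _ [D _ <-]; apply: luk_and_le1.
    by case/andP: (prenbhd01 hsig (f x) D).
  by case/andP: (Gamma01 D _ (rel_preopen01 hsig D)).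
rewrite ge_max U0 /=.
set T := supI [set luk_and (prenbhd tau x B) (Gamma B (rel_preopen tau B)) | B in [set: set X]].
have aT : LPC tau <= T.
  apply: infI_lb; last by exists x.
  move=> _ [z _ <-]; apply: supI_ge0 => _ [B _ <-]; apply: luk_and_le1.
    by case/andP: (prenbhd01 htau z B).
  by case/andP: (Gamma01 B _ (rel_preopen01 htau B)).
suff : T <= U + 2 - pre_irresolute tau sigma f - pre_open_map tau sigma f by lra.
apply: supI_lub; last by lra.
move=> _ [B _ <-].
have hA := prenbhd_img (f:=f) htau hsig x B.
have hB := Gamma_img (f:=f) htau hsig B.
have hU : luk_and (prenbhd sigma (f x) (f @` B))
            (Gamma (f @` B) (rel_preopen sigma (f @` B))) <= U.
  apply: supI_ub; last by exists (f @` B).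
  move=> _ [D _ <-]; apply: luk_and_le1.
    by case/andP: (prenbhd01 hsig (f x) D).
  by case/andP: (Gamma01 D _ (rel_preopen01 hsig D)).
have := luk_and_ge (prenbhd sigma (f x) (f @` B)) (Gamma (f @` B) (rel_preopen sigma (f @` B))).
move=> h; apply: luk_and_le.

all: lra.
Qed.
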